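(* Assume Schanuel's conjecture $(S)$. Let $\alpha,\beta,\gamma$ be nonzero complex numbers with $\alpha\neq 1$ and $\beta^{\gamma}\neq 1$. Suppose that at least one of $\alpha$ and $\beta^{\gamma}$ is irrational, and at least one of them is algebraic. If $\beta^{\gamma\alpha}$ is algebraic, then $\alpha^{\beta^{\gamma}}$ is transcendental.
   Context: Schanuel's conjecture $(S)$: if $\alpha_1,\dots,\alpha_n\in\mathbb{C}$ are linearly independent over $\mathbb{Q}$, then the transcendence degree of $\mathbb{Q}(\alpha_1,\dots,\alpha_n,e^{\alpha_1},\dots,e^{\alpha_n})$ over $\mathbb{Q}$ is at least $n$. Powers: fix a determination $\log\beta$ and $\log\alpha$; $\beta^{\gamma}:=e^{\gamma\log\beta}$, $\beta^{\gamma\alpha}:=e^{\gamma\alpha\log\beta}$ (i.e. $(\beta^\gamma)^\alpha$ computed with $\log(\beta^\gamma)=\gamma\log\beta$), and $\alpha^{\beta^{\gamma}}:=e^{\beta^{\gamma}\log\alpha}$. *)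

(* Defs.v *)
From Stdlib Require Import Reals QArith List.
Open Scope R_scope.

Record Cplx : Type := mkC { cre : R; cim : R }.

Definition Czero : Cplx := mkC 0 0.
Definition Cone : Cplx := mkC 1 0.
Definition Cadd (z w : Cplx) : Cplx := mkC (cre z + cre w) (cim z + cim w).
Definition Cmul (z w : Cplx) : Cplx :=
  mkC (cre z * cre w - cim z * cim w) (cre z * cim w + cim z * cre w).
Fixpoint Cpow (z : Cplx) (n : nat) : Cplx :=
  match n with O => Cone | S k => Cmul z (Cpow z k) end.
Definition Cexp (z : Cplx) : Cplx :=
  mkC (exp (cre z) * cos (cim z)) (exp (cre z) * sin (cim z)).
Definition CofQ (q : Q) : Cplx := mkC (Q2R q) 0.

Definition Csum (l : list Cplx) : Cplx := fold_right Cadd Czero l.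

Definition is_rational (z : Cplx) : Prop := exists q : Q, z = CofQ q.

(** evaluation of the univariate polynomial with coefficient list
    [p_0; p_1; ...] (constant term first) at z *)
Fixpoint poly_eval (p : list Q) (z : Cplx) : Cplx :=
  match p with
  | nil => Czero
  | c :: p' => Cadd (CofQ c) (Cmul z (poly_eval p' z))
  end.

Definition poly_nonzero (p : list Q) : Prop := exists c, In c p /\ ~ (c == 0)%Q.

Definition is_algebraic (z : Cplx) : Prop :=
  exists p : list Q, poly_nonzero p /\ poly_eval p z = Czero.

(** a monomial is a coefficient together with an exponent vector *)
Definition monomial_eval (e : list nat) (xs : list Cplx) : Cplx :=
  fold_right Cmul Cone (map (fun p => Cpow (fst p) (snd p)) (combine xs e)).

Definition mpoly_eval (P : list (Q * list nat)) (xs : list Cplx) : Cplx :=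
  Csum (map (fun m => Cmul (CofQ (fst m)) (monomial_eval (snd m) xs)) P).

(** [P] is a (representation of a) nonzero polynomial in [n] variables:
    nonempty list of monomials with pairwise distinct exponent vectors of
    length [n] and nonzero coefficients *)
Definition mpoly_nonzero (n : nat) (P : list (Q * list nat)) : Prop :=
  P <> nil /\ NoDup (map snd P) /\
  (forall m, In m P -> ~ (fst m == 0)%Q /\ length (snd m) = n).

Definition alg_indep (xs : list Cplx) : Prop :=
  forall P, mpoly_nonzero (length xs) P -> mpoly_eval P xs <> Czero.

(** transcendence degree of Q(S) over Q is at least n
    (a transcendence basis can be extracted from the generators S) *)
Definition trdeg_ge (S : list Cplx) (n : nat) : Prop :=
  exists ys : list Cplx, length ys = n /\ (forall y, In y ys -> In y S) /\ alg_indep ys.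

Definition Q_lin_indep (alphas : list Cplx) : Prop :=
  forall qs : list Q, length qs = length alphas ->
    Csum (map (fun p => Cmul (CofQ (fst p)) (snd p)) (combine qs alphas)) = Czero ->
    forall q, In q qs -> (q == 0)%Q.

Definition Schanuel : Prop :=
  forall alphas : list Cplx, Q_lin_indep alphas ->
    trdeg_ge (alphas ++ map Cexp alphas) (length alphas).

(* Main.v *)
Require Import Defs.
From Stdlib Require Import Reals QArith List Lia Lra Qreals Field.
From mathcomp Require ssreflect ssrbool ssrfun eqtype ssrnat seq ssralg ssrnum poly mxpoly rat ssrint fintype.
From mathcomp.real_closed Require complex.
From mathcomp.reals_stdlib Require Rstruct.
Open Scope R_scope.
Lemma Cext : forall z w : Cplx, cre z = cre w -> cim z = cim w -> z = w.
Proof. intros [a b] [c d]; simpl; intros; subst; reflexivity. Qed.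

Definition Copp (z : Cplx) : Cplx := mkC (- cre z) (- cim z).
Definition Csub (z w : Cplx) : Cplx := Cadd z (Copp w).
Definition Cinv (z : Cplx) : Cplx :=
  mkC (cre z / (cre z * cre z + cim z * cim z)) (- cim z / (cre z * cre z + cim z * cim z)).
Definition Cdiv (z w : Cplx) : Cplx := Cmul z (Cinv w).

Lemma Cring_th : ring_theory Czero Cone Cadd Cmul Csub Copp (@eq Cplx).
Proof.
  constructor; intros; apply Cext; destruct x; try destruct y; try destruct z;
  unfold Cadd, Cmul, Csub, Copp, Czero, Cone; simpl; ring.
Qed.

Lemma Cone_neq : Cone <> Czero.
Proof. intro H. injection H. lra. Qed.

Lemma norm_pos : forall z, z <> Czero -> cre z * cre z + cim z * cim z <> 0.
Proof.
  intros [a b] H; simpl. intro E. apply H.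
  assert (a = 0) by nra. assert (b = 0) by nra. subst. reflexivity.
Qed.

Lemma Cfield_th : field_theory Czero Cone Cadd Cmul Csub Copp Cdiv Cinv (@eq Cplx).
Proof.
  constructor.
  - exact Cring_th.
  - exact Cone_neq.
  - reflexivity.
  - intros z Hz. apply norm_pos in Hz. destruct z as [a b]. apply Cext; unfold Cinv, Cmul, Cone; simpl in *; field; auto.
Qed.

Add Field Cfield : Cfield_th.

Definition Qz : Q := Qmake 0 1.
Module T.
Import ssreflect ssrbool ssrfun eqtype ssrnat seq fintype ssralg ssrnum poly mxpoly rat ssrint complex Rstruct.
Import GRing.Theory Num.Theory.
Local Open Scope ring_scope. Local Open Scope complex_scope.

Definition toC (z : Cplx) : R[i] := Complex (cre z) (cim z).
Lemma toC_add z w : toC (Cadd z w) = toC z + toC w. Proof. reflexivity. Qed.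
Lemma toC_mul z w : toC (Cmul z w) = toC z * toC w. Proof. reflexivity. Qed.
Lemma toC0 : toC Czero = 0. Proof. reflexivity. Qed.
Lemma toC1 : toC Cone = 1. Proof. reflexivity. Qed.
Lemma toC_inj z w : toC z = toC w -> z = w.
Proof. case: z => a b; case: w => c d; rewrite /toC => [[-> ->]]. by []. Qed.

Definition Z2int (z : Z) : int := match z with Z0 => 0 | Zpos p => Posz (Pos.to_nat p) | Zneg p => - Posz (Pos.to_nat p) end.
Lemma Z2intE z : ((Z2int z)%:~R : R) = IZR z.
Proof.
case: z => [|p|p] /=; first by [].
- by rewrite IZRposE INRE Pos_to_natE.
- by rewrite mulrNz /IZR -INR_IPR INRE.
Qed.
Definition Q2rat (q : Q) : rat := (Z2int (Qnum q))%:~R / (Pos.to_nat (Qden q))%:R.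
Lemma Q2ratE q : ratr (Q2rat q) = Q2R q :> R.
Proof.
rewrite /Q2rat /Q2R fmorph_div /= ratr_int ratr_nat Z2intE -INRE INR_IPR.
by [].
Qed.
Lemma toC_CofQ q : toC (CofQ q) = ratr (Q2rat q).
Proof.
have -> : toC (CofQ q) = (Q2R q)%:C by [].
by rewrite -Q2ratE (fmorph_rat (real_complex R)).
Qed.
Lemma Z2int_surj (i : int) : exists z, Z2int z = i.
Proof.
case: i => n.
- case: n => [|n]; first by exists Z0.
  exists (Zpos (Pos.of_nat n.+1)); change (Posz (Pos.to_nat (Pos.of_nat n.+1)) = n.+1); by rewrite Nat2Pos.id.
- exists (Zneg (Pos.of_nat n.+1)); change (- Posz (Pos.to_nat (Pos.of_nat n.+1)) = Negz n); by rewrite Nat2Pos.id // NegzE.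
Qed.

Lemma rat_repr (r : rat) : exists q, Q2rat q = r.
Proof.
have [z Hz] := Z2int_surj (numq r).
have dpos := denq_gt0 r.
case E: (denq r) dpos => [n|n] //= Hn.
have n0 : (n <> 0)%nat by move=> h; rewrite h in Hn.
exists (Qmake z (Pos.of_nat n)).
rewrite /Q2rat /= Hz Nat2Pos.id //.
by rewrite -[RHS]divq_num_den E.
Qed.

Lemma Q2rat0 q : Q2rat q = 0 -> Qeq q 0.
Proof.
move=> h. apply: eqR_Qeq. rewrite -Q2ratE h rmorph0. by rewrite /Q2R /= Rmult_0_l.
Qed.
Lemma Q2rat_eq0 q : Qeq q Qz -> Q2rat q = 0.
Proof.
move=> Hq. have := Q2ratE q. rewrite (Qeq_eqR _ _ Hq) => E.
have E0 : Q2R Qz = 0 by rewrite /Q2R /= Rmult_0_l.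
rewrite E0 in E. by move/eqP: E; rewrite fmorph_eq0 => /eqP.
Qed.

Definition polyQ (p : list Q) : {poly rat} := Poly (map Q2rat p).

Lemma toC_eval p z : toC (poly_eval p z) = (map_poly ratr (polyQ p)).[toC z].
Proof.
elim: p => [|c p IH] /=.
  by rewrite /polyQ /= rmorph0 horner0.
rewrite /polyQ /= cons_poly_def rmorphD rmorphM /= map_polyX map_polyC /=.
rewrite hornerD hornerM hornerX hornerC toC_add toC_mul toC_CofQ -IH.
by rewrite addrC mulrC.
Qed.

Lemma alg_to (z : Cplx) : is_algebraic z -> algebraicOver (@ratr R[i]) (toC z).
Proof.
move=> [p [[c [Hin Hc]] He]].
exists (polyQ p).
  apply/eqP => H0.
  have : forall i, nth 0 (map Q2rat p) i = 0.
    by move=> i; rewrite -coef_Poly -/(polyQ p) H0 coef0.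
  move: Hin; elim: p {He H0} => [|a p IH] //= [->|Hin] Hn.
    by apply: Hc; apply: Q2rat0; apply: (Hn 0%N).
  by apply: IH => // i; apply: (Hn i.+1).
by rewrite /root -toC_eval He toC0.
Qed.

Lemma alg_from (z : Cplx) : algebraicOver (@ratr R[i]) (toC z) -> is_algebraic z.
Proof.
move=> [rp nz rt].
have [l Hl] : exists l, map Q2rat l = polyseq rp.
  elim: (polyseq rp) => [|a s [l Hl]]; first by exists nil.
  have [q Hq] := rat_repr a. by exists (q :: l); rewrite /= Hq Hl.
have Hp : polyQ l = rp by rewrite /polyQ Hl polyseqK.
exists l; split.
  case: (boolP [forall i : 'I_(size l), Q2rat (nth Qz l i) == 0]) => [/forallP Hall | ].
    exfalso; move/eqP: nz; apply.
    apply/polyP => i; rewrite coef0 -Hp coef_Poly.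
    case: (ltnP i (size l)) => hi.
      rewrite (nth_map Qz) //. by apply/eqP; apply: (Hall (Ordinal hi)).
    by rewrite nth_default // size_map.
  move/forallPn => [i /eqP Hi].
  exists (nth Qz l i); split.
    have := ltn_ord i; move: (nat_of_ord i) => j hj; clear -hj.
    elim: l j hj => [|a l IH] [|j] //= hj; first by left.
    by right; apply: IH.
  move=> Hq; apply: Hi. 
  by rewrite (Q2rat_eq0 _ Hq).
apply: toC_inj. by rewrite toC_eval Hp toC0; apply/eqP.
Qed.
Lemma toC_inv z : toC (Cinv z) = (toC z)^-1.
Proof.
case: z => a b. rewrite /toC /Cinv /=. rewrite /GRing.inv /= !expr2. 
have -> : Rdiv (Ropp b) (Rplus (Rmult a a) (Rmult b b)) = - (b / (a * a + b * b)) by rewrite /Rdiv; symmetry; apply: Ropp_mult_distr_l.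
by rewrite /Rdiv.
Qed.

Lemma alg_addT z w : is_algebraic z -> is_algebraic w -> is_algebraic (Cadd z w).
Proof. move=> /alg_to hz /alg_to hw. apply: alg_from. rewrite toC_add. exact: algebraic_add. Qed.
Lemma alg_mulT z w : is_algebraic z -> is_algebraic w -> is_algebraic (Cmul z w).
Proof. move=> /alg_to hz /alg_to hw. apply: alg_from. rewrite toC_mul. exact: algebraic_mul. Qed.
Lemma alg_invT z : is_algebraic z -> is_algebraic (Cinv z).
Proof. move=> /alg_to hz. apply: alg_from. rewrite toC_inv. exact: algebraic_inv. Qed.

Lemma nonrootT p : poly_nonzero p -> exists t, poly_eval p t <> Czero.
Proof.
move=> [c [Hin Hc]].
have nz : polyQ p != 0.
  apply/eqP => H0.
  have : forall i, nth 0 (map Q2rat p) i = 0.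
    by move=> i; rewrite -coef_Poly -/(polyQ p) H0 coef0.
  move: Hin; elim: p {H0} => [|a p IH] //= [->|Hin] Hn.
    by apply: Hc; apply: Q2rat0; apply: (Hn 0%N).
  by apply: IH => // i; apply: (Hn i.+1).
set mp := map_poly (@ratr R[i]) (polyQ p).
have nzm : mp != 0 by rewrite map_poly_eq0.
set rs := [seq (k%:R : R[i]) | k <- iota 0 (size mp)].
case: (boolP (all (root mp) rs)) => [Hall | /allPn [x /mapP [k _ ->] Hk]].
  have U : uniq rs.
    rewrite /rs map_inj_uniq ?iota_uniq // => m n /eqP; rewrite eqr_nat => /eqP; done.
  have := max_poly_roots nzm Hall U. by rewrite /rs size_map size_iota ltnn.
exists (mkC (INR k) 0) => H.
have E : toC (mkC (INR k) 0) = k%:R.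
  by rewrite /toC INRE -(rmorph_nat (real_complex R)).
move: Hk; rewrite -E /root /mp -toC_eval H toC0. by rewrite eqxx.
Qed.
End T.

Lemma CofQ_add q r : CofQ (q + r) = Cadd (CofQ q) (CofQ r).
Proof. apply Cext; simpl; [rewrite Q2R_plus|]; ring. Qed.
Lemma CofQ_mul q r : CofQ (q * r) = Cmul (CofQ q) (CofQ r).
Proof. apply Cext; simpl; [rewrite Q2R_mult|]; ring. Qed.
Lemma CofQ_opp q : CofQ (- q) = Copp (CofQ q).
Proof. apply Cext; simpl; [rewrite Q2R_opp|]; ring. Qed.
Lemma CofQ_eq0 q : (q == 0)%Q -> CofQ q = Czero.
Proof. intro H. apply Cext; simpl; [|reflexivity]. rewrite (Qeq_eqR _ _ H). unfold Q2R; simpl; ring. Qed.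
Lemma CofQ_1 : CofQ 1 = Cone.
Proof. apply Cext; simpl; [unfold Q2R; simpl; field|reflexivity]. Qed.
Lemma CofQ_inj q r : CofQ q = CofQ r -> (q == r)%Q.
Proof. intro H. apply eqR_Qeq. change (cre (CofQ q) = cre (CofQ r)). rewrite H; reflexivity. Qed.
Lemma CofQ_neq0 q : ~ (q == 0)%Q -> CofQ q <> Czero.
Proof. intros H E. apply H. apply CofQ_inj. rewrite E. symmetry; apply CofQ_eq0; reflexivity. Qed.

Lemma alg_rat q : is_algebraic (CofQ q).
Proof.
  exists ((- q)%Q :: 1%Q :: nil). split.
  - exists 1%Q. split; [simpl; auto|]. intro H; discriminate H.
  - cbn [poly_eval]. rewrite CofQ_opp, CofQ_1. field.
Qed.

Lemma alg_add z w : is_algebraic z -> is_algebraic w -> is_algebraic (Cadd z w).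
Proof. exact (@T.alg_addT z w). Qed.
Lemma alg_mul z w : is_algebraic z -> is_algebraic w -> is_algebraic (Cmul z w).
Proof. exact (@T.alg_mulT z w). Qed.
Lemma alg_inv z : is_algebraic z -> is_algebraic (Cinv z).
Proof. exact (@T.alg_invT z). Qed.
Lemma alg_opp z : is_algebraic z -> is_algebraic (Copp z).
Proof.
  intro H. replace (Copp z) with (Cmul (CofQ (- (1))) z).
  - apply alg_mul; [apply alg_rat|exact H].
  - rewrite CofQ_opp, CofQ_1. ring.
Qed.
Lemma alg_sub z w : is_algebraic z -> is_algebraic w -> is_algebraic (Csub z w).
Proof. intros; apply alg_add; auto; apply alg_opp; auto. Qed.
Lemma alg_div z w : is_algebraic z -> is_algebraic w -> is_algebraic (Cdiv z w).
Proof. intros; apply alg_mul; auto; apply alg_inv; auto. Qed.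
Lemma alg_one : is_algebraic Cone.
Proof. rewrite <- CofQ_1. apply alg_rat. Qed.

Lemma Cexp_add z w : Cexp (Cadd z w) = Cmul (Cexp z) (Cexp w).
Proof.
  destruct z as [a b], w as [c d]. apply Cext; simpl;
  rewrite exp_plus; [rewrite cos_plus|rewrite sin_plus]; ring.
Qed.
Lemma Cexp_0 : Cexp Czero = Cone.
Proof. apply Cext; simpl; rewrite exp_0; [rewrite cos_0|rewrite sin_0]; ring. Qed.
Lemma Cexp_neq0 z : Cexp z <> Czero.
Proof.
  intro H. assert (Cmul (Cexp z) (Cexp (Copp z)) = Cone) as E.
  { rewrite <- Cexp_add. replace (Cadd z (Copp z)) with Czero by ring. apply Cexp_0. }
  rewrite H in E. apply Cone_neq. rewrite <- E. ring.
Qed.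

Definition Cnat (n : nat) : Cplx := mkC (INR n) 0.
Lemma Cexp_nat n z : Cexp (Cmul (Cnat n) z) = Cpow (Cexp z) n.
Proof.
  induction n.
  - simpl. replace (Cmul (Cnat 0) z) with Czero. apply Cexp_0.
    apply Cext; simpl; ring.
  - simpl Cpow. rewrite <- IHn, <- Cexp_add. f_equal.
    unfold Cnat. rewrite S_INR. apply Cext; simpl; ring.
Qed.

Lemma Cpow_add z m n : Cpow z (m + n) = Cmul (Cpow z m) (Cpow z n).
Proof. induction m; simpl; [ring|rewrite IHm; ring]. Qed.
Lemma Cpow_mul z m n : Cpow z (m * n) = Cpow (Cpow z m) n.
Proof.
  induction n; simpl. rewrite Nat.mul_0_r; reflexivity.
  rewrite Nat.mul_succ_r, Cpow_add, IHn. ring.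
Qed.
Lemma Cpow_Cmul z w n : Cpow (Cmul z w) n = Cmul (Cpow z n) (Cpow w n).
Proof. induction n; simpl; [ring|rewrite IHn; ring]. Qed.
Lemma Cpow_one n : Cpow Cone n = Cone.
Proof. induction n; simpl; [ring|rewrite IHn; ring]. Qed.
Lemma Cpow_neq0 z n : z <> Czero -> Cpow z n <> Czero.
Proof.
  intro H. induction n; simpl. exact Cone_neq.
  intro E. assert (Cmul (Cinv z) (Cmul z (Cpow z n)) = Czero) as E2 by (rewrite E; ring).
  apply IHn. rewrite <- E2. field. exact H.
Qed.

Lemma poly_eval_app l1 l2 z :
  poly_eval (l1 ++ l2) z = Cadd (poly_eval l1 z) (Cmul (Cpow z (length l1)) (poly_eval l2 z)).
Proof. induction l1; simpl. ring. rewrite IHl1. ring. Qed.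
Lemma poly_eval_zeros k z : poly_eval (repeat 0%Q k) z = Czero.
Proof. induction k; simpl. reflexivity. rewrite IHk, CofQ_eq0 by reflexivity. ring. Qed.

Fixpoint expand (m : nat) (p : list Q) : list Q :=
  match p with nil => nil | c :: p' => c :: repeat 0%Q m ++ expand m p' end.
Lemma expand_eval m p z : poly_eval (expand m p) z = poly_eval p (Cpow z (S m)).
Proof.
  induction p; simpl. reflexivity.
  rewrite poly_eval_app, poly_eval_zeros, IHp, repeat_length. simpl. ring.
Qed.
Lemma expand_in m p c : In c p -> In c (expand m p).
Proof.
  induction p; simpl; intros H; [contradiction|]. destruct H as [H|H]; auto.
  right. apply in_or_app. right. auto.
Qed.

Lemma alg_pow_root z n : is_algebraic (Cpow z (S n)) -> is_algebraic z.
Proof.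
  intros [p [[c [Hc1 Hc2]] He]]. exists (expand n p). split.
  - exists c. split; auto. apply expand_in; auto.
  - rewrite expand_eval. exact He.
Qed.

Lemma alg_pow z n : is_algebraic z -> is_algebraic (Cpow z n).
Proof. intro H. induction n; simpl. apply alg_one. apply alg_mul; auto. Qed.

Lemma Cnat_pos p : Cnat (Pos.to_nat p) = CofQ (Zpos p # 1).
Proof. apply Cext; simpl; [|reflexivity]. unfold Q2R; simpl. rewrite INR_IPR. unfold IZR. change (IPR 1) with 1. field. Qed.

Lemma lemmaG z q : ~ (q == 0)%Q -> is_algebraic (Cexp (Cmul (CofQ q) z)) -> is_algebraic (Cexp z).
Proof.
  intros Hq Ha. destruct q as [num den].
  set (w := Cexp (Cmul (CofQ (num # den)) z)) in *.
  assert (Hw : Cpow w (Pos.to_nat den) = Cexp (Cmul (CofQ (num # 1)) z)).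
  { unfold w. rewrite <- Cexp_nat. f_equal. rewrite Cnat_pos.
    apply Cext; simpl; unfold Q2R; simpl; field; apply IZR_neq; discriminate. }
  assert (Hw' : is_algebraic (Cexp (Cmul (CofQ (num # 1)) z))) by (rewrite <- Hw; apply alg_pow; auto).
  destruct num as [|p|p].
  - exfalso. apply Hq. reflexivity.
  - rewrite <- Cnat_pos, Cexp_nat in Hw'.
    destruct (Pos.to_nat p) eqn:E. exfalso; lia.
    apply alg_pow_root with n. exact Hw'.
  - assert (Cpow (Cexp z) (Pos.to_nat p) = Cinv (Cexp (Cmul (CofQ (Zneg p # 1)) z))) as E.
    { rewrite <- Cexp_nat, Cnat_pos.
      assert (Cmul (Cexp (Cmul (CofQ (Z.pos p # 1)) z)) (Cexp (Cmul (CofQ (Z.neg p # 1)) z)) = Cone) as E1.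
      { rewrite <- Cexp_add, <- Cexp_0. f_equal. apply Cext; simpl; unfold Q2R, IZR; simpl; ring. }
      assert (Hn := Cexp_neq0 (Cmul (CofQ (Z.neg p # 1)) z)).
      set (X := Cexp (Cmul (CofQ (Z.pos p # 1)) z)) in *.
      set (Y := Cexp (Cmul (CofQ (Z.neg p # 1)) z)) in *.
      replace X with (Cmul (Cmul X Y) (Cinv Y)) by (field; auto).
      rewrite E1. field. auto. }
    apply alg_inv in Hw'. rewrite <- E in Hw'.
    destruct (Pos.to_nat p) eqn:E2. exfalso; lia.
    apply alg_pow_root with n. exact Hw'.
Qed.

Definition mono := (Q * list nat)%type.
Definition term (m : mono) (xs : list Cplx) := Cmul (CofQ (fst m)) (monomial_eval (snd m) xs).

Lemma mpoly_eval_nil xs : mpoly_eval nil xs = Czero.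
Proof. reflexivity. Qed.
Lemma mpoly_eval_cons m P xs : mpoly_eval (m :: P) xs = Cadd (term m xs) (mpoly_eval P xs).
Proof. reflexivity. Qed.
Lemma mpoly_eval_app P Q xs : mpoly_eval (P ++ Q) xs = Cadd (mpoly_eval P xs) (mpoly_eval Q xs).
Proof. induction P; simpl app. rewrite mpoly_eval_nil; ring. rewrite !mpoly_eval_cons, IHP; ring. Qed.

Lemma mon_nil xs : monomial_eval nil xs = Cone.
Proof. destruct xs; reflexivity. Qed.
Lemma mon_cons x xs a e : monomial_eval (a :: e) (x :: xs) = Cmul (Cpow x a) (monomial_eval e xs).
Proof. reflexivity. Qed.

Fixpoint vadd (e1 e2 : list nat) : list nat :=
  match e1, e2 with a :: e1', b :: e2' => (a + b)%nat :: vadd e1' e2' | _, _ => nil end.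

Lemma vadd_length e1 e2 n : length e1 = n -> length e2 = n -> length (vadd e1 e2) = n.
Proof.
  revert e2 n; induction e1; intros [|b e2] n H1 H2; simpl in *; subst; try discriminate; auto.
Qed.

Lemma mon_vadd xs e1 e2 : length e1 = length xs -> length e2 = length xs ->
  monomial_eval (vadd e1 e2) xs = Cmul (monomial_eval e1 xs) (monomial_eval e2 xs).
Proof.
  revert e1 e2; induction xs; intros [|a1 e1] [|a2 e2] H1 H2; simpl in *; try discriminate.
  - rewrite !mon_nil. ring.
  - rewrite !mon_cons, IHxs by lia. rewrite Cpow_add. ring.
Qed.

Lemma mon_zeros n xs : monomial_eval (repeat 0%nat n) xs = Cone.
Proof.
  revert xs; induction n; intros [|x xs]; simpl; try reflexivity.
  rewrite mon_cons, IHn. simpl. ring.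
Qed.

Definition WF (n : nat) (P : list mono) := forall m, In m P -> length (snd m) = n.

Definition pmul (P Q : list mono) : list mono :=
  flat_map (fun m => map (fun m' => ((fst m * fst m')%Q, vadd (snd m) (snd m'))) Q) P.

Lemma WF_app n P Q : WF n P -> WF n Q -> WF n (P ++ Q).
Proof. intros HP HQ m Hm. apply in_app_or in Hm. destruct Hm; auto. Qed.

Lemma WF_pmul n P Q : WF n P -> WF n Q -> WF n (pmul P Q).
Proof.
  intros HP HQ m Hm. unfold pmul in Hm. apply in_flat_map in Hm. destruct Hm as [m1 [H1 H2]].
  apply in_map_iff in H2. destruct H2 as [m2 [<- H3]]. simpl. apply vadd_length; auto.
Qed.

Lemma pmul_eval P Q xs : WF (length xs) P -> WF (length xs) Q ->
  mpoly_eval (pmul P Q) xs = Cmul (mpoly_eval P xs) (mpoly_eval Q xs).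
Proof.
  intros HP HQ. induction P as [|m P IH]; unfold pmul; cbn [flat_map]. rewrite !mpoly_eval_nil. ring.
  rewrite mpoly_eval_app. fold (pmul P Q). rewrite IH by (intros m' Hm'; apply HP; simpl; auto).
  rewrite mpoly_eval_cons.
  assert (Hm : length (snd m) = length xs) by (apply HP; simpl; auto).
  assert (E : mpoly_eval (map (fun m' => ((fst m * fst m')%Q, vadd (snd m) (snd m'))) Q) xs
              = Cmul (term m xs) (mpoly_eval Q xs)).
  { clear IH. induction Q as [|m' Q IHQ]; cbn [map]. rewrite !mpoly_eval_nil. ring.
    rewrite !mpoly_eval_cons, IHQ by (intros m'' Hm''; apply HQ; simpl; auto).
    unfold term; cbn [fst snd]. rewrite CofQ_mul, mon_vadd; auto. ring. apply HQ; simpl; auto. }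
  rewrite E. ring.
Qed.

Definition pconst (n : nat) (c : Q) : list mono := (c, repeat 0%nat n) :: nil.
Lemma pconst_eval n c xs : mpoly_eval (pconst n c) xs = CofQ c.
Proof. unfold pconst. rewrite mpoly_eval_cons, mpoly_eval_nil. unfold term; simpl. rewrite mon_zeros. ring. Qed.
Lemma WF_pconst n c : WF n (pconst n c).
Proof. intros m [<-|[]]. simpl. apply repeat_length. Qed.

Fixpoint unitv (n j : nat) : list nat :=
  match n with O => nil | S n' => match j with O => 1%nat :: repeat 0%nat n' | S j' => 0%nat :: unitv n' j' end end.
Lemma unitv_length n j : length (unitv n j) = n.
Proof. revert j; induction n; intros [|j]; simpl; auto. rewrite repeat_length; auto. Qed.
Lemma unitv_eval n j xs : length xs = n -> monomial_eval (unitv n j) xs = nth j xs Cone.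
Proof.
  revert j xs; induction n; intros j [|x xs] H; simpl in H; try discriminate.
  - destruct j; reflexivity.
  - destruct j; simpl unitv; rewrite mon_cons.
    + rewrite mon_zeros. simpl. ring.
    + rewrite IHn by lia. simpl. ring.
Qed.
Definition pvar (n j : nat) : list mono := (1%Q, unitv n j) :: nil.
Lemma pvar_eval n j xs : length xs = n -> mpoly_eval (pvar n j) xs = nth j xs Cone.
Proof. intro H. unfold pvar. rewrite mpoly_eval_cons, mpoly_eval_nil. unfold term; simpl. rewrite unitv_eval, CofQ_1 by auto. ring. Qed.
Lemma WF_pvar n j : WF n (pvar n j).
Proof. intros m [<-|[]]. simpl. apply unitv_length. Qed.

Fixpoint ppow (n : nat) (P : list mono) (k : nat) : list mono :=
  match k with O => pconst n 1 | S k' => pmul P (ppow n P k') end.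
Lemma WF_ppow n P k : WF n P -> WF n (ppow n P k).
Proof. intro H; induction k; simpl. apply WF_pconst. apply WF_pmul; auto. Qed.
Lemma ppow_eval P k xs : WF (length xs) P -> mpoly_eval (ppow (length xs) P k) xs = Cpow (mpoly_eval P xs) k.
Proof.
  intro H; induction k; simpl. rewrite pconst_eval, CofQ_1. reflexivity.
  rewrite pmul_eval, IHk; auto. apply WF_ppow; auto.
Qed.

Fixpoint ins (m : mono) (l : list mono) : list mono :=
  match l with
  | nil => m :: nil
  | m' :: l' => if list_eq_dec Nat.eq_dec (snd m) (snd m') then ((fst m + fst m')%Q, snd m') :: l'
                else m' :: ins m l'
  end.
Definition collect (P : list mono) : list mono := fold_right ins nil P.
Definition filt (l : list mono) : list mono := filter (fun m => negb (Qeq_bool (fst m) 0)) l.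
Definition norm (P : list mono) := filt (collect P).

Lemma ins_eval m l xs : mpoly_eval (ins m l) xs = Cadd (term m xs) (mpoly_eval l xs).
Proof.
  induction l as [|m' l IH]; simpl ins.
  - reflexivity.
  - destruct (list_eq_dec Nat.eq_dec (snd m) (snd m')) as [E|E].
    + rewrite !mpoly_eval_cons. unfold term; cbn [fst snd]. rewrite CofQ_add, E. ring.
    + rewrite !mpoly_eval_cons, IH. ring.
Qed.
Lemma collect_eval P xs : mpoly_eval (collect P) xs = mpoly_eval P xs.
Proof. induction P; simpl collect. reflexivity. rewrite ins_eval, IHP, mpoly_eval_cons. reflexivity. Qed.
Lemma filt_eval l xs : mpoly_eval (filt l) xs = mpoly_eval l xs.
Proof.
  induction l as [|m l IH]; unfold filt; simpl filter. reflexivity.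
  destruct (Qeq_bool (fst m) 0) eqn:E; simpl negb; cbv iota.
  - fold (filt l). rewrite IH, mpoly_eval_cons. unfold term. rewrite CofQ_eq0. ring.
    apply Qeq_bool_iff; auto.
  - fold (filt l). rewrite !mpoly_eval_cons, IH. reflexivity.
Qed.

Lemma ins_in e m l : In e (map snd (ins m l)) -> e = snd m \/ In e (map snd l).
Proof.
  induction l as [|m' l IH]; simpl ins.
  - simpl. intros [H|[]]. auto.
  - destruct (list_eq_dec Nat.eq_dec (snd m) (snd m')); simpl; intros [H|H]; auto.
    destruct (IH H); auto.
Qed.
Lemma ins_nodup m l : NoDup (map snd l) -> NoDup (map snd (ins m l)).
Proof.
  induction l as [|m' l IH]; simpl ins; intro H.
  - simpl. constructor. simpl; auto. constructor.
  - destruct (list_eq_dec Nat.eq_dec (snd m) (snd m')); simpl in *; auto.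
    inversion H; subst. constructor; auto.
    intro Hin. apply ins_in in Hin. destruct Hin; auto.
Qed.
Lemma collect_nodup P : NoDup (map snd (collect P)).
Proof. induction P; simpl. constructor. apply ins_nodup; auto. Qed.
Lemma filt_in e l : In e (map snd (filt l)) -> In e (map snd l).
Proof.
  intro H. apply in_map_iff in H. destruct H as [m [<- Hm]]. unfold filt in Hm.
  apply filter_In in Hm. apply in_map. tauto.
Qed.
Lemma filt_nodup l : NoDup (map snd l) -> NoDup (map snd (filt l)).
Proof.
  induction l as [|m l IH]; intro H; unfold filt; simpl. constructor.
  inversion H; subst. destruct (negb (Qeq_bool (fst m) 0)); fold (filt l); simpl; auto.
  constructor; auto. intro Hin; apply filt_in in Hin; auto.
Qed.
Lemma WF_ins n m l : length (snd m) = n -> WF n l -> WF n (ins m l).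
Proof.
  intros Hm; induction l as [|m' l IH]; intros Hl; simpl ins.
  - intros x [<-|[]]; auto.
  - destruct (list_eq_dec Nat.eq_dec (snd m) (snd m')).
    + intros x [<-|Hx]; simpl; auto. apply Hl; simpl; auto. apply Hl; simpl; auto.
    + intros x [<-|Hx]. apply Hl; simpl; auto. apply IH; auto. intros y Hy; apply Hl; simpl; auto.
Qed.
Lemma WF_collect n P : WF n P -> WF n (collect P).
Proof.
  induction P; intros H; simpl. intros x []. apply WF_ins. apply H; simpl; auto.
  apply IHP. intros y Hy; apply H; simpl; auto.
Qed.

Lemma dep_witness ys P zs : WF (length ys) P -> mpoly_eval P ys = Czero -> mpoly_eval P zs <> Czero ->
  ~ alg_indep ys.
Proof.
  intros HW H0 H1 HI. apply (HI (norm P)).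
  - split; [|split].
    + intro E. apply H1. rewrite <- collect_eval, <- filt_eval. fold (norm P). rewrite E. reflexivity.
    + apply filt_nodup, collect_nodup.
    + intros m Hm. unfold norm, filt in Hm. apply filter_In in Hm. destruct Hm as [Hm Hq]. split.
      * intro E. apply Qeq_bool_iff in E. rewrite E in Hq. discriminate.
      * apply (WF_collect _ _ HW). auto.
  - unfold norm. rewrite filt_eval, collect_eval. exact H0.
Qed.

Fixpoint hom (n : nat) (p : list Q) (F G : list mono) : list mono :=
  match p with
  | nil => nil
  | c :: p' => pmul (pconst n c) (ppow n G (length p')) ++ pmul F (hom n p' F G)
  end.
Fixpoint hev (p : list Q) (f g : Cplx) : Cplx :=
  match p with nil => Czero | c :: p' => Cadd (Cmul (CofQ c) (Cpow g (length p'))) (Cmul f (hev p' f g)) end.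

Lemma WF_hom n p F G : WF n F -> WF n G -> WF n (hom n p F G).
Proof.
  intros HF HG; induction p; cbn [hom]. intros x [].
  apply WF_app; apply WF_pmul; auto. apply WF_pconst. apply WF_ppow; auto.
Qed.
Lemma hom_eval p F G xs : WF (length xs) F -> WF (length xs) G ->
  mpoly_eval (hom (length xs) p F G) xs = hev p (mpoly_eval F xs) (mpoly_eval G xs).
Proof.
  intros HF HG; induction p; cbn [hom hev]. reflexivity.
  rewrite mpoly_eval_app, !pmul_eval, pconst_eval, ppow_eval, IHp; auto.
  apply WF_hom; auto. apply WF_pconst. apply WF_ppow; auto.
Qed.
Lemma hev_spec p k g : hev p (Cmul k g) g = Cmul (Cpow g (pred (length p))) (poly_eval p k).
Proof.
  induction p as [|c p IH]; simpl hev. simpl. ring.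
  destruct p as [|c' p'].
  - simpl. ring.
  - rewrite IH. simpl length. cbn [pred poly_eval Cpow]. ring.
Qed.

Lemma witness ys k F G : is_algebraic k -> WF (length ys) F -> WF (length ys) G ->
  mpoly_eval F ys = Cmul k (mpoly_eval G ys) ->
  (forall t, exists zs, length zs = length ys /\ mpoly_eval F zs = t /\ mpoly_eval G zs = Cone) ->
  ~ alg_indep ys.
Proof.
  intros [p [Hp Hpk]] HF HG HFG Hz.
  destruct (T.nonrootT p Hp) as [t Ht].
  destruct (Hz t) as [zs [Hl [HFz HGz]]].
  apply (dep_witness ys (hom (length ys) p F G) zs).
  - apply WF_hom; auto.
  - rewrite hom_eval, HFG, hev_spec, Hpk by auto. ring.
  - rewrite <- Hl. rewrite hom_eval by (rewrite Hl; auto). rewrite HFz, HGz.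
    replace t with (Cmul t Cone) by ring. rewrite hev_spec, Cpow_one.
    replace (Cmul t Cone) with t by ring. replace (Cmul Cone (poly_eval p t)) with (poly_eval p t) by ring. exact Ht.
Qed.

Fixpoint setn (n j : nat) (t : Cplx) : list Cplx :=
  match n with O => nil | S n' => match j with O => t :: repeat Cone n' | S j' => Cone :: setn n' j' t end end.
Lemma setn_length n j t : length (setn n j t) = n.
Proof. revert j; induction n; intros [|j]; simpl; auto. rewrite repeat_length; auto. Qed.
Lemma nth_repeat_one i n : nth i (repeat Cone n) Cone = Cone.
Proof. revert i; induction n; intros [|i]; simpl; auto. Qed.
Lemma setn_nth n j t i : (j < n)%nat -> nth i (setn n j t) Cone = if Nat.eqb i j then t else Cone.
Proof.
  revert j i; induction n; intros j i H. lia.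
  destruct j as [|j]; destruct i as [|i]; simpl; auto.
  - apply nth_repeat_one.
  - apply IHn. lia.
Qed.

Lemma W1 ys j : (j < length ys)%nat -> is_algebraic (nth j ys Cone) -> ~ alg_indep ys.
Proof.
  intros Hj Ha. apply (witness ys (nth j ys Cone) (pvar (length ys) j) (pconst (length ys) 1)); auto.
  apply WF_pvar. apply WF_pconst.
  rewrite pvar_eval, pconst_eval, CofQ_1 by auto. ring.
  intro t. exists (setn (length ys) j t). rewrite setn_length. split; auto.
  rewrite pvar_eval, pconst_eval, CofQ_1, setn_nth, Nat.eqb_refl by (auto; apply setn_length). auto.
Qed.

Lemma W2 ys i j k : (i < length ys)%nat -> (j < length ys)%nat -> i <> j -> is_algebraic k ->
  nth j ys Cone = Cmul k (nth i ys Cone) -> ~ alg_indep ys.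
Proof.
  intros Hi Hj Hij Ha E. apply (witness ys k (pvar (length ys) j) (pvar (length ys) i)); auto.
  apply WF_pvar. apply WF_pvar.
  rewrite !pvar_eval by auto. auto.
  intro t. exists (setn (length ys) j t). rewrite setn_length. split; auto.
  rewrite !pvar_eval, !setn_nth, Nat.eqb_refl by (auto; apply setn_length).
  apply Nat.eqb_neq in Hij. rewrite Hij. auto.
Qed.

Lemma W3 ys i i' j k : (i < length ys)%nat -> (i' < length ys)%nat -> (j < length ys)%nat ->
  i <> j -> i' <> j -> is_algebraic k ->
  nth j ys Cone = Cmul k (Cmul (nth i ys Cone) (nth i' ys Cone)) -> ~ alg_indep ys.
Proof.
  intros Hi Hi' Hj Hij Hij' Ha E.
  apply (witness ys k (pvar (length ys) j) (pmul (pvar (length ys) i) (pvar (length ys) i'))); auto.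
  apply WF_pvar. apply WF_pmul; apply WF_pvar.
  rewrite pmul_eval, !pvar_eval by (auto; apply WF_pvar). auto.
  intro t. exists (setn (length ys) j t). rewrite setn_length. split; auto.
  rewrite pmul_eval by (rewrite setn_length; apply WF_pvar).
  rewrite !pvar_eval, !setn_nth, Nat.eqb_refl by (auto; apply setn_length).
  apply Nat.eqb_neq in Hij. apply Nat.eqb_neq in Hij'. rewrite Hij, Hij'. split; auto. ring.
Qed.

Lemma W4 ys i i' j k nu : (i < length ys)%nat -> (i' < length ys)%nat -> (j < length ys)%nat ->
  i <> j -> i' <> j -> is_algebraic k ->
  Cmul (Cadd (nth j ys Cone) (CofQ nu)) (nth i ys Cone) = Cmul k (nth i' ys Cone) -> ~ alg_indep ys.
Proof.
  intros Hi Hi' Hj Hij Hij' Ha E.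
  set (n := length ys).
  apply (witness ys k (pmul (pvar n j ++ pconst n nu) (pvar n i)) (pvar n i')); auto.
  apply WF_pmul. apply WF_app. apply WF_pvar. apply WF_pconst. apply WF_pvar. apply WF_pvar.
  unfold n. rewrite pmul_eval, mpoly_eval_app, !pvar_eval, pconst_eval; auto.
  apply WF_app. apply WF_pvar. apply WF_pconst. apply WF_pvar.
  intro t. exists (setn n j (Cadd t (CofQ (- nu)))). rewrite setn_length. split; auto.
  assert (Hl : length (setn n j (Cadd t (CofQ (- nu)))) = n) by apply setn_length.
  rewrite pmul_eval, mpoly_eval_app by (rewrite Hl; try apply WF_app; try apply WF_pvar; apply WF_pconst).
  rewrite !pvar_eval, pconst_eval, !setn_nth, Nat.eqb_refl by (auto; apply setn_length).
  apply Nat.eqb_neq in Hij. apply Nat.eqb_neq in Hij'. rewrite Hij, Hij'. split; auto.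
  rewrite CofQ_opp. ring.
Qed.

From Stdlib Require Import Classical.

Lemma indep2 x1 x2 : (forall q1 q2, Cadd (Cmul (CofQ q1) x1) (Cmul (CofQ q2) x2) = Czero ->
  (q1 == 0)%Q /\ (q2 == 0)%Q) -> Q_lin_indep (x1 :: x2 :: nil).
Proof.
  intros H qs Hl E q Hq. destruct qs as [|q1 [|q2 [|]]]; simpl in Hl; try discriminate.
  unfold Csum in E. cbn [combine map fold_right fst snd] in E.
  destruct (H q1 q2) as [H1 H2]. rewrite <- E. ring.
  simpl in Hq. destruct Hq as [<-|[<-|[]]]; auto.
Qed.
Lemma indep3 x1 x2 x3 : (forall q1 q2 q3, Cadd (Cmul (CofQ q1) x1) (Cadd (Cmul (CofQ q2) x2) (Cmul (CofQ q3) x3)) = Czero ->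
  (q1 == 0)%Q /\ (q2 == 0)%Q /\ (q3 == 0)%Q) -> Q_lin_indep (x1 :: x2 :: x3 :: nil).
Proof.
  intros H qs Hl E q Hq. destruct qs as [|q1 [|q2 [|q3 [|]]]]; simpl in Hl; try discriminate.
  unfold Csum in E. cbn [combine map fold_right fst snd] in E.
  destruct (H q1 q2 q3) as [H1 [H2 H3]]. rewrite <- E. ring.
  simpl in Hq. destruct Hq as [<-|[<-|[<-|[]]]]; auto.
Qed.
Lemma indep4 x1 x2 x3 x4 : (forall q1 q2 q3 q4, Cadd (Cmul (CofQ q1) x1) (Cadd (Cmul (CofQ q2) x2)
  (Cadd (Cmul (CofQ q3) x3) (Cmul (CofQ q4) x4))) = Czero ->
  (q1 == 0)%Q /\ (q2 == 0)%Q /\ (q3 == 0)%Q /\ (q4 == 0)%Q) -> Q_lin_indep (x1 :: x2 :: x3 :: x4 :: nil).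
Proof.
  intros H qs Hl E q Hq. destruct qs as [|q1 [|q2 [|q3 [|q4 [|]]]]]; simpl in Hl; try discriminate.
  unfold Csum in E. cbn [combine map fold_right fst snd] in E.
  destruct (H q1 q2 q3 q4) as [H1 [H2 [H3 H4]]]. rewrite <- E. ring.
  simpl in Hq. destruct Hq as [<-|[<-|[<-|[<-|[]]]]]; auto.
Qed.
Lemma dep3 x1 x2 x3 : ~ Q_lin_indep (x1 :: x2 :: x3 :: nil) -> exists q1 q2 q3,
  Cadd (Cmul (CofQ q1) x1) (Cadd (Cmul (CofQ q2) x2) (Cmul (CofQ q3) x3)) = Czero /\
  ~ ((q1 == 0)%Q /\ (q2 == 0)%Q /\ (q3 == 0)%Q).
Proof.
  intro Hn. apply NNPP. intro Hc. apply Hn. apply indep3. intros q1 q2 q3 E.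
  apply NNPP. intro Z. apply Hc. exists q1, q2, q3. auto.
Qed.
Lemma dep4 x1 x2 x3 x4 : ~ Q_lin_indep (x1 :: x2 :: x3 :: x4 :: nil) -> exists q1 q2 q3 q4,
  Cadd (Cmul (CofQ q1) x1) (Cadd (Cmul (CofQ q2) x2) (Cadd (Cmul (CofQ q3) x3) (Cmul (CofQ q4) x4))) = Czero /\
  ~ ((q1 == 0)%Q /\ (q2 == 0)%Q /\ (q3 == 0)%Q /\ (q4 == 0)%Q).
Proof.
  intro Hn. apply NNPP. intro Hc. apply Hn. apply indep4. intros q1 q2 q3 q4 E.
  apply NNPP. intro Z. apply Hc. exists q1, q2, q3, q4. auto.
Qed.

Lemma Cmul_cancel x y z : z <> Czero -> Cmul x z = Cmul y z -> x = y.
Proof.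
  intros Hz E. replace x with (Cmul (Cmul x z) (Cinv z)) by (field; auto).
  rewrite E. field; auto.
Qed.
Lemma Cmul_eq0 x z : z <> Czero -> Cmul x z = Czero -> x = Czero.
Proof. intros Hz E. apply (Cmul_cancel x Czero z Hz). rewrite E. ring. Qed.

Lemma CofQ_inv q : ~ (q == 0)%Q -> CofQ (/ q) = Cinv (CofQ q).
Proof.
  intro H. assert (Q2R q <> 0%R) as H'.
  { intro E. apply H. apply eqR_Qeq. rewrite E. unfold Q2R; simpl; ring. }
  apply Cext; unfold Cinv; simpl; rewrite ?Q2R_inv by auto; field; auto.
Qed.

Lemma LI1 z q1 q2 : ~ is_rational z -> Cadd (CofQ q1) (Cmul (CofQ q2) z) = Czero ->
  (q1 == 0)%Q /\ (q2 == 0)%Q.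
Proof.
  intros Hz E. destruct (Qeq_dec q2 0) as [H2|H2].
  - split; auto. rewrite (CofQ_eq0 q2 H2) in E. apply CofQ_inj. rewrite (CofQ_eq0 0) by reflexivity.
    rewrite <- E. ring.
  - exfalso. apply Hz. exists (- q1 / q2)%Q. unfold Qdiv. rewrite CofQ_mul, CofQ_opp, CofQ_inv by auto.
    assert (Hq := CofQ_neq0 _ H2).
    apply (Cmul_cancel _ _ (CofQ q2) Hq).
    replace (Cmul z (CofQ q2)) with (Csub (Cadd (CofQ q1) (Cmul (CofQ q2) z)) (CofQ q1)) by ring.
    rewrite E. field. auto.
Qed.

Ltac find_pos t l :=
  match l with
  | cons ?x ?r => match x with t => constr:(O) | _ => let n := find_pos t r in constr:(S n) end
  end.
Ltac drop_to t l :=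
  match l with
  | cons ?x ?r => match x with t => r | _ => drop_to t r end
  end.
Ltac algtac := solve [repeat first [assumption | apply alg_mul | apply alg_div | apply alg_inv
  | apply alg_add | apply alg_sub | apply alg_opp | apply alg_rat | apply alg_one]].

Ltac get_ys H := match type of H with alg_indep ?ys => ys end.

Ltac dW1 H := let ys := get_ys H in
  match goal with Ha : is_algebraic ?t |- _ => let j := find_pos t ys in
    eapply (W1 ys j); [simpl; lia | cbn [nth]; exact Ha | exact H] end.
Ltac dDup H := let ys := get_ys H in
  match ys with context [cons ?x ?rest] =>
    let i := find_pos x ys in let r := drop_to x ys in let k := find_pos x r in
    eapply (W2 ys i (S (i + k)) Cone); [simpl; lia | simpl; lia | lia | apply alg_one | cbn [nth Nat.add]; ring | exact H] end.
Ltac dW2 H tj k ti eqt := let ys := get_ys H in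
  let j := find_pos tj ys in let i := find_pos ti ys in
  eapply (W2 ys i j k); [simpl; lia | simpl; lia | lia | algtac | cbn [nth]; eqt | exact H].
Ltac dW3 H tj k ti ti' eqt := let ys := get_ys H in
  let j := find_pos tj ys in let i := find_pos ti ys in let i' := find_pos ti' ys in
  eapply (W3 ys i i' j k); [simpl; lia | simpl; lia | simpl; lia | lia | lia | algtac | cbn [nth]; eqt | exact H].
Ltac dW4 H tj nu ti k ti' eqt := let ys := get_ys H in
  let j := find_pos tj ys in let i := find_pos ti ys in let i' := find_pos ti' ys in
  eapply (W4 ys i i' j k nu); [simpl; lia | simpl; lia | simpl; lia | lia | lia | algtac | cbn [nth]; eqt | exact H].

Lemma rat_alg z : is_rational z -> is_algebraic z.
Proof. intros [q ->]. apply alg_rat. Qed.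
Lemma irr_neq0 z : ~ is_rational z -> z <> Czero.
Proof. intros H E. apply H. exists 0%Q. rewrite E. symmetry. apply CofQ_eq0. reflexivity. Qed.

Lemma caseE2 (Sch : Schanuel) (alpha L b c : Cplx) : is_algebraic alpha -> ~ is_rational alpha ->
  is_algebraic b -> is_algebraic c -> L <> Czero -> Cexp L = b -> Cexp (Cmul alpha L) = c -> False.
Proof.
  intros Ha Hr Hb Hc HL Eb Ec.
  assert (Ha0 := irr_neq0 _ Hr).
  assert (HI : Q_lin_indep (L :: Cmul alpha L :: nil)).
  { apply indep2. intros q1 q2 E. apply (LI1 alpha); auto.
    apply (Cmul_eq0 _ L HL). rewrite <- E. ring. }
  destruct (Sch _ HI) as [ys [Hl [Hin Hind]]].
  cbn [app map length] in Hin, Hl. rewrite Eb, Ec in Hin.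
  destruct ys as [|y1 [|y2 [|]]]; simpl in Hl; try discriminate.
  assert (H1 : In y1 (L :: Cmul alpha L :: b :: c :: nil)) by (apply Hin; simpl; auto).
  assert (H2 : In y2 (L :: Cmul alpha L :: b :: c :: nil)) by (apply Hin; simpl; auto).
  clear Hin.
  destruct H1 as [<-|[<-|[<-|[<-|[]]]]]; destruct H2 as [<-|[<-|[<-|[<-|[]]]]];
  first [ dW1 Hind | dDup Hind
        | dW2 Hind (Cmul alpha L) alpha L ltac:(solve [ring])
        | dW2 Hind L (Cinv alpha) (Cmul alpha L) ltac:(solve [field; auto]) ].
Qed.

Ltac use_eq E c := match type of E with ?Z = Czero => match goal with |- _ = ?Y =>
  transitivity (Cadd Y (Cmul c Z)); [field; auto | rewrite E; ring] end end.

Lemma cexp_neq0 z w : Cexp z = w -> w <> Czero.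
Proof. intros <-. apply Cexp_neq0. Qed.

Lemma caseH (Sch : Schanuel) (alpha b c d L A : Cplx) : is_algebraic alpha -> ~ is_rational alpha ->
  ~ is_algebraic b -> is_algebraic c -> is_algebraic d -> L <> Czero -> A <> Czero ->
  Cexp L = b -> Cexp (Cmul alpha L) = c -> Cexp A = alpha -> Cexp (Cmul b A) = d -> False.
Proof.
  intros Ha Hr Hb Hc Hd HL HA Eb Ec Ea Ed.
  assert (Ha0 := irr_neq0 _ Hr). assert (Hb0 := cexp_neq0 _ _ Eb).
  destruct (classic (Q_lin_indep (L :: Cmul alpha L :: A :: Cmul b A :: nil))) as [HI|HD].
  - destruct (Sch _ HI) as [ys [Hl [Hin Hind]]].
    cbn [app map length] in Hin, Hl. rewrite Eb, Ec, Ea, Ed in Hin.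
    destruct ys as [|y1 [|y2 [|y3 [|y4 [|]]]]]; simpl in Hl; try discriminate.
    assert (H1 : In y1 (L :: Cmul alpha L :: A :: Cmul b A :: b :: c :: alpha :: d :: nil)) by (apply Hin; simpl; auto).
    assert (H2 : In y2 (L :: Cmul alpha L :: A :: Cmul b A :: b :: c :: alpha :: d :: nil)) by (apply Hin; simpl; auto).
    assert (H3 : In y3 (L :: Cmul alpha L :: A :: Cmul b A :: b :: c :: alpha :: d :: nil)) by (apply Hin; simpl; auto).
    assert (H4 : In y4 (L :: Cmul alpha L :: A :: Cmul b A :: b :: c :: alpha :: d :: nil)) by (apply Hin; simpl; auto).
    clear Hin.
    destruct H1 as [<-|[<-|[<-|[<-|[<-|[<-|[<-|[<-|[]]]]]]]]]; try dW1 Hind;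
    destruct H2 as [<-|[<-|[<-|[<-|[<-|[<-|[<-|[<-|[]]]]]]]]]; try dW1 Hind;
    destruct H3 as [<-|[<-|[<-|[<-|[<-|[<-|[<-|[<-|[]]]]]]]]]; try dW1 Hind;
    destruct H4 as [<-|[<-|[<-|[<-|[<-|[<-|[<-|[<-|[]]]]]]]]]; try dW1 Hind;
    first [ dDup Hind
          | dW2 Hind (Cmul alpha L) alpha L ltac:(solve [ring])
          | dW2 Hind L (Cinv alpha) (Cmul alpha L) ltac:(solve [field; auto])
          | dW3 Hind (Cmul b A) Cone b A ltac:(solve [ring]) ].
  - destruct (dep4 _ _ _ _ HD) as [q1 [q2 [q3 [q4 [E NZ]]]]]. clear HD.
    destruct (Qeq_dec q4 0) as [Z4|Z4].
    + rewrite (CofQ_eq0 q4 Z4) in E.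
      destruct (Qeq_dec q3 0) as [Z3|Z3].
      * rewrite (CofQ_eq0 q3 Z3) in E. apply NZ.
        destruct (LI1 alpha q1 q2 Hr) as [Z1 Z2]; [|auto].
        apply (Cmul_eq0 _ L HL). rewrite <- E. ring.
      * assert (HZ3 := CofQ_neq0 _ Z3).
        set (lam := Cdiv (Copp (Cadd (CofQ q1) (Cmul (CofQ q2) alpha))) (CofQ q3)).
        assert (Hlam : is_algebraic lam) by (unfold lam; algtac).
        assert (EA : A = Cmul lam L) by (unfold lam; use_eq E (Cinv (CofQ q3))).
        assert (Hlam0 : lam <> Czero) by (intro Z; apply HA; rewrite EA, Z; ring).
        assert (HI : Q_lin_indep (L :: Cmul alpha L :: Cmul b A :: nil)).
        { apply indep3. intros s1 s2 s3 E'.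
          destruct (Qeq_dec s3 0) as [S3|S3].
          - rewrite (CofQ_eq0 s3 S3) in E'.
            destruct (LI1 alpha s1 s2 Hr) as [Z1 Z2]; [|auto].
            apply (Cmul_eq0 _ L HL). rewrite <- E'. ring.
          - exfalso. assert (HS3 := CofQ_neq0 _ S3). apply Hb.
            rewrite EA in E'.
            assert (Eb' : b = Cdiv (Copp (Cadd (CofQ s1) (Cmul (CofQ s2) alpha))) (Cmul (CofQ s3) lam)).
            { use_eq E' (Cinv (Cmul (Cmul (CofQ s3) lam) L)). }
            rewrite Eb'. algtac. }
        destruct (Sch _ HI) as [ys [Hl [Hin Hind]]].
        cbn [app map length] in Hin, Hl. rewrite Eb, Ec, Ed in Hin.
        destruct ys as [|y1 [|y2 [|y3 [|]]]]; simpl in Hl; try discriminate.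
        assert (H1 : In y1 (L :: Cmul alpha L :: Cmul b A :: b :: c :: d :: nil)) by (apply Hin; simpl; auto).
        assert (H2 : In y2 (L :: Cmul alpha L :: Cmul b A :: b :: c :: d :: nil)) by (apply Hin; simpl; auto).
        assert (H3 : In y3 (L :: Cmul alpha L :: Cmul b A :: b :: c :: d :: nil)) by (apply Hin; simpl; auto).
        clear Hin.
        destruct H1 as [<-|[<-|[<-|[<-|[<-|[<-|[]]]]]]]; try dW1 Hind;
        destruct H2 as [<-|[<-|[<-|[<-|[<-|[<-|[]]]]]]]; try dW1 Hind;
        destruct H3 as [<-|[<-|[<-|[<-|[<-|[<-|[]]]]]]]; try dW1 Hind;
        first [ dDup Hind
              | dW2 Hind (Cmul alpha L) alpha L ltac:(solve [ring])
              | dW2 Hind L (Cinv alpha) (Cmul alpha L) ltac:(solve [field; auto])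
              | dW3 Hind (Cmul b A) lam b L ltac:(solve [rewrite EA; ring])
              | dW3 Hind (Cmul b A) (Cdiv lam alpha) b (Cmul alpha L) ltac:(solve [rewrite EA; field; auto]) ].
    + assert (HZ4 := CofQ_neq0 _ Z4).
      assert (HI : Q_lin_indep (L :: Cmul alpha L :: A :: nil)).
      { apply indep3. intros s1 s2 s3 E'.
        destruct (Qeq_dec s3 0) as [S3|S3].
        - rewrite (CofQ_eq0 s3 S3) in E'.
          destruct (LI1 alpha s1 s2 Hr) as [Z1 Z2]; [|auto].
          apply (Cmul_eq0 _ L HL). rewrite <- E'. ring.
        - exfalso. assert (HS3 := CofQ_neq0 _ S3). apply Hb.
          set (lam := Cdiv (Copp (Cadd (CofQ s1) (Cmul (CofQ s2) alpha))) (CofQ s3)).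
          assert (Hlam : is_algebraic lam) by (unfold lam; algtac).
          assert (EA : A = Cmul lam L) by (unfold lam; use_eq E' (Cinv (CofQ s3))).
          assert (Hlam0 : lam <> Czero) by (intro Z; apply HA; rewrite EA, Z; ring).
          rewrite EA in E.
          assert (Eb' : b = Cdiv (Copp (Cadd (Cadd (CofQ q1) (Cmul (CofQ q2) alpha)) (Cmul (CofQ q3) lam))) (Cmul (CofQ q4) lam)).
          { use_eq E (Cinv (Cmul (Cmul (CofQ q4) lam) L)). }
          rewrite Eb'. algtac. }
      set (kap := Cdiv (Copp (Cadd (CofQ q1) (Cmul (CofQ q2) alpha))) (CofQ q4)).
      assert (Hkap : is_algebraic kap) by (unfold kap; algtac).
      assert (EQ1 : Cmul (Cadd b (CofQ (q3 / q4))) A = Cmul kap L).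
      { unfold kap, Qdiv. rewrite CofQ_mul, CofQ_inv by auto. use_eq E (Cinv (CofQ q4)). }
      destruct (Sch _ HI) as [ys [Hl [Hin Hind]]].
      cbn [app map length] in Hin, Hl. rewrite Eb, Ec, Ea in Hin.
      destruct ys as [|y1 [|y2 [|y3 [|]]]]; simpl in Hl; try discriminate.
      assert (H1 : In y1 (L :: Cmul alpha L :: A :: b :: c :: alpha :: nil)) by (apply Hin; simpl; auto).
      assert (H2 : In y2 (L :: Cmul alpha L :: A :: b :: c :: alpha :: nil)) by (apply Hin; simpl; auto).
      assert (H3 : In y3 (L :: Cmul alpha L :: A :: b :: c :: alpha :: nil)) by (apply Hin; simpl; auto).
      clear Hin.
      destruct H1 as [<-|[<-|[<-|[<-|[<-|[<-|[]]]]]]]; try dW1 Hind;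
      destruct H2 as [<-|[<-|[<-|[<-|[<-|[<-|[]]]]]]]; try dW1 Hind;
      destruct H3 as [<-|[<-|[<-|[<-|[<-|[<-|[]]]]]]]; try dW1 Hind;
      first [ dDup Hind
            | dW2 Hind (Cmul alpha L) alpha L ltac:(solve [ring])
            | dW2 Hind L (Cinv alpha) (Cmul alpha L) ltac:(solve [field; auto])
            | dW4 Hind b (q3 / q4)%Q A kap L ltac:(exact EQ1)
            | dW4 Hind b (q3 / q4)%Q A (Cdiv kap alpha) (Cmul alpha L) ltac:(solve [rewrite EQ1; field; auto]) ].
Qed.

Lemma caseH2 (Sch : Schanuel) (alpha b c d L A : Cplx) : ~ is_algebraic alpha -> is_algebraic b -> ~ is_rational b ->
  is_algebraic c -> is_algebraic d -> L <> Czero -> A <> Czero ->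
  Cexp L = b -> Cexp (Cmul alpha L) = c -> Cexp A = alpha -> Cexp (Cmul b A) = d -> False.
Proof.
  intros Ha Hb HrB Hc Hd HL HA Eb Ec Ea Ed.
  assert (Hr : ~ is_rational alpha) by (intro R; apply Ha; apply rat_alg; auto).
  assert (Ha0 := cexp_neq0 _ _ Ea). assert (Hb0 := cexp_neq0 _ _ Eb).
  destruct (classic (Q_lin_indep (L :: Cmul alpha L :: A :: Cmul b A :: nil))) as [HI|HD].
  - destruct (Sch _ HI) as [ys [Hl [Hin Hind]]].
    cbn [app map length] in Hin, Hl. rewrite Eb, Ec, Ea, Ed in Hin.
    destruct ys as [|y1 [|y2 [|y3 [|y4 [|]]]]]; simpl in Hl; try discriminate.
    assert (H1 : In y1 (L :: Cmul alpha L :: A :: Cmul b A :: b :: c :: alpha :: d :: nil)) by (apply Hin; simpl; auto).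
    assert (H2 : In y2 (L :: Cmul alpha L :: A :: Cmul b A :: b :: c :: alpha :: d :: nil)) by (apply Hin; simpl; auto).
    assert (H3 : In y3 (L :: Cmul alpha L :: A :: Cmul b A :: b :: c :: alpha :: d :: nil)) by (apply Hin; simpl; auto).
    assert (H4 : In y4 (L :: Cmul alpha L :: A :: Cmul b A :: b :: c :: alpha :: d :: nil)) by (apply Hin; simpl; auto).
    clear Hin.
    destruct H1 as [<-|[<-|[<-|[<-|[<-|[<-|[<-|[<-|[]]]]]]]]]; try dW1 Hind;
    destruct H2 as [<-|[<-|[<-|[<-|[<-|[<-|[<-|[<-|[]]]]]]]]]; try dW1 Hind;
    destruct H3 as [<-|[<-|[<-|[<-|[<-|[<-|[<-|[<-|[]]]]]]]]]; try dW1 Hind;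
    destruct H4 as [<-|[<-|[<-|[<-|[<-|[<-|[<-|[<-|[]]]]]]]]]; try dW1 Hind;
    first [ dDup Hind
          | dW2 Hind (Cmul b A) b A ltac:(solve [ring])
          | dW2 Hind A (Cinv b) (Cmul b A) ltac:(solve [field; auto])
          | dW3 Hind (Cmul alpha L) Cone alpha L ltac:(solve [ring]) ].
  - destruct (dep4 _ _ _ _ HD) as [q1 [q2 [q3 [q4 [E NZ]]]]]. clear HD.
    set (u := Cadd (CofQ q3) (Cmul (CofQ q4) b)).
    assert (Hu : u <> Czero).
    { intro U. destruct (LI1 b q3 q4 HrB U) as [Z3 Z4].
      rewrite (CofQ_eq0 q3 Z3), (CofQ_eq0 q4 Z4) in E.
      destruct (LI1 alpha q1 q2 Hr) as [Z1 Z2]. apply (Cmul_eq0 _ L HL). rewrite <- E. ring.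
      apply NZ; auto. }
    assert (Hua : is_algebraic u) by (unfold u; algtac).
    destruct (Qeq_dec q2 0) as [Z2|Z2].
    + rewrite (CofQ_eq0 q2 Z2) in E.
      assert (Z1 : ~ (q1 == 0)%Q).
      { intro Z1. rewrite (CofQ_eq0 q1 Z1) in E. apply Hu. apply (Cmul_eq0 _ A HA). rewrite <- E. unfold u. ring. }
      assert (HZ1 := CofQ_neq0 _ Z1).
      set (mu := Cdiv (Copp u) (CofQ q1)).
      assert (Hmu : is_algebraic mu) by (unfold mu; algtac).
      assert (EL : L = Cmul mu A) by (unfold mu, u; use_eq E (Cinv (CofQ q1))).
      assert (Hmu0 : mu <> Czero) by (intro Z; apply HL; rewrite EL, Z; ring).
      assert (HI : Q_lin_indep (Cmul alpha L :: A :: Cmul b A :: nil)).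
      { apply indep3. intros s1 s2 s3 E'.
        destruct (Qeq_dec s1 0) as [S1|S1].
        - rewrite (CofQ_eq0 s1 S1) in E'.
          destruct (LI1 b s2 s3 HrB) as [Z2' Z3']; [|auto].
          apply (Cmul_eq0 _ A HA). rewrite <- E'. ring.
        - exfalso. assert (HS1 := CofQ_neq0 _ S1). apply Ha.
          rewrite EL in E'.
          assert (Ea' : alpha = Cdiv (Copp (Cadd (CofQ s2) (Cmul (CofQ s3) b))) (Cmul (CofQ s1) mu)).
          { use_eq E' (Cinv (Cmul (Cmul (CofQ s1) mu) A)). }
          rewrite Ea'. algtac. }
      destruct (Sch _ HI) as [ys [Hl [Hin Hind]]].
      cbn [app map length] in Hin, Hl. rewrite Ec, Ea, Ed in Hin.
      destruct ys as [|y1 [|y2 [|y3 [|]]]]; simpl in Hl; try discriminate.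
      assert (H1 : In y1 (Cmul alpha L :: A :: Cmul b A :: c :: alpha :: d :: nil)) by (apply Hin; simpl; auto).
      assert (H2 : In y2 (Cmul alpha L :: A :: Cmul b A :: c :: alpha :: d :: nil)) by (apply Hin; simpl; auto).
      assert (H3 : In y3 (Cmul alpha L :: A :: Cmul b A :: c :: alpha :: d :: nil)) by (apply Hin; simpl; auto).
      clear Hin.
      destruct H1 as [<-|[<-|[<-|[<-|[<-|[<-|[]]]]]]]; try dW1 Hind;
      destruct H2 as [<-|[<-|[<-|[<-|[<-|[<-|[]]]]]]]; try dW1 Hind;
      destruct H3 as [<-|[<-|[<-|[<-|[<-|[<-|[]]]]]]]; try dW1 Hind;
      first [ dDup Hind
            | dW2 Hind (Cmul b A) b A ltac:(solve [ring])
            | dW2 Hind A (Cinv b) (Cmul b A) ltac:(solve [field; auto])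
            | dW3 Hind (Cmul alpha L) mu alpha A ltac:(solve [rewrite EL; ring])
            | dW3 Hind (Cmul alpha L) (Cdiv mu b) alpha (Cmul b A) ltac:(solve [rewrite EL; field; auto]) ].
    + assert (HZ2 := CofQ_neq0 _ Z2).
      assert (HI : Q_lin_indep (L :: A :: Cmul b A :: nil)).
      { apply indep3. intros s1 s2 s3 E'.
        destruct (Qeq_dec s1 0) as [S1|S1].
        - rewrite (CofQ_eq0 s1 S1) in E'.
          destruct (LI1 b s2 s3 HrB) as [Z2' Z3']; [|auto].
          apply (Cmul_eq0 _ A HA). rewrite <- E'. ring.
        - exfalso. assert (HS1 := CofQ_neq0 _ S1). apply Ha.
          set (mu := Cdiv (Copp (Cadd (CofQ s2) (Cmul (CofQ s3) b))) (CofQ s1)).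
          assert (Hmu : is_algebraic mu) by (unfold mu; algtac).
          assert (EL : L = Cmul mu A) by (unfold mu; use_eq E' (Cinv (CofQ s1))).
          assert (Hmu0 : mu <> Czero) by (intro Z; apply HL; rewrite EL, Z; ring).
          rewrite EL in E.
          assert (Ea' : alpha = Cdiv (Csub (Cdiv (Copp u) mu) (CofQ q1)) (CofQ q2)).
          { unfold u. use_eq E (Cinv (Cmul (Cmul (CofQ q2) mu) A)). }
          rewrite Ea'. algtac. }
      set (kap := Cdiv (Copp u) (CofQ q2)).
      assert (Hkap : is_algebraic kap) by (unfold kap; algtac).
      assert (EQ1 : Cmul (Cadd alpha (CofQ (q1 / q2))) L = Cmul kap A).
      { unfold kap, u, Qdiv. rewrite CofQ_mul, CofQ_inv by auto. use_eq E (Cinv (CofQ q2)). }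
      destruct (Sch _ HI) as [ys [Hl [Hin Hind]]].
      cbn [app map length] in Hin, Hl. rewrite Eb, Ea, Ed in Hin.
      destruct ys as [|y1 [|y2 [|y3 [|]]]]; simpl in Hl; try discriminate.
      assert (H1 : In y1 (L :: A :: Cmul b A :: b :: alpha :: d :: nil)) by (apply Hin; simpl; auto).
      assert (H2 : In y2 (L :: A :: Cmul b A :: b :: alpha :: d :: nil)) by (apply Hin; simpl; auto).
      assert (H3 : In y3 (L :: A :: Cmul b A :: b :: alpha :: d :: nil)) by (apply Hin; simpl; auto).
      clear Hin.
      destruct H1 as [<-|[<-|[<-|[<-|[<-|[<-|[]]]]]]]; try dW1 Hind;
      destruct H2 as [<-|[<-|[<-|[<-|[<-|[<-|[]]]]]]]; try dW1 Hind;
      destruct H3 as [<-|[<-|[<-|[<-|[<-|[<-|[]]]]]]]; try dW1 Hind;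
      first [ dDup Hind
            | dW2 Hind (Cmul b A) b A ltac:(solve [ring])
            | dW2 Hind A (Cinv b) (Cmul b A) ltac:(solve [field; auto])
            | dW4 Hind alpha (q1 / q2)%Q L kap A ltac:(exact EQ1)
            | dW4 Hind alpha (q1 / q2)%Q L (Cdiv kap b) (Cmul b A) ltac:(solve [rewrite EQ1; field; auto]) ].
Qed.

Theorem mainTheorem3 :
  Schanuel ->
  forall alpha beta gamma log_a log_b : Cplx,
    alpha <> Czero -> beta <> Czero -> gamma <> Czero -> alpha <> Cone ->
    Cexp log_a = alpha -> Cexp log_b = beta ->
    Cexp (Cmul gamma log_b) <> Cone ->
    (~ is_rational alpha \/ ~ is_rational (Cexp (Cmul gamma log_b))) ->
    (is_algebraic alpha \/ is_algebraic (Cexp (Cmul gamma log_b))) ->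
    is_algebraic (Cexp (Cmul (Cmul gamma alpha) log_b)) ->
    ~ is_algebraic (Cexp (Cmul (Cexp (Cmul gamma log_b)) log_a)).
Proof.
  intros Sch alpha beta gamma A lb Ha0 _ _ Ha1 Ea _ Hb1 Hirr Halg Hc Hd.
  set (L := Cmul gamma lb) in *.
  assert (Ec : Cexp (Cmul (Cmul gamma alpha) lb) = Cexp (Cmul alpha L)) by (f_equal; unfold L; ring).
  rewrite Ec in Hc.
  set (b := Cexp L) in *. set (c := Cexp (Cmul alpha L)) in *. set (d := Cexp (Cmul b A)) in *.
  assert (HL : L <> Czero) by (intro Z; apply Hb1; unfold b; rewrite Z; apply Cexp_0).
  assert (HA : A <> Czero) by (intro Z; apply Ha1; rewrite <- Ea, Z; apply Cexp_0).
  assert (Hb0 : b <> Czero) by apply Cexp_neq0.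
  destruct (classic (is_algebraic b)) as [HbA|HbN].
  - destruct (classic (is_rational b)) as [HbR|HbR].
    + destruct Hirr as [Hr|Hr]; [|contradiction].
      destruct HbR as [q Eq].
      assert (Hq : ~ (q == 0)%Q) by (intro Z; apply Hb0; rewrite Eq; apply CofQ_eq0; auto).
      assert (HaA : is_algebraic alpha).
      { rewrite <- Ea. apply (lemmaG A q Hq). rewrite <- Eq. exact Hd. }
      exact (caseE2 Sch alpha L b c HaA Hr HbA Hc HL eq_refl eq_refl).
    + destruct (classic (is_algebraic alpha)) as [HaA|HaN].
      * exact (caseE2 Sch b A alpha d HbA HbR HaA Hd HA Ea eq_refl).
      * exact (caseH2 Sch alpha b c d L A HaN HbA HbR Hc Hd HL HA eq_refl eq_refl Ea eq_refl).
  - destruct Halg as [HaA|HbA]; [|contradiction].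
    destruct (classic (is_rational alpha)) as [HaR|HaR].
    + destruct HaR as [q Eq].
      assert (Hq : ~ (q == 0)%Q) by (intro Z; apply Ha0; rewrite Eq; apply CofQ_eq0; auto).
      apply HbN. unfold b. apply (lemmaG L q Hq). rewrite <- Eq. exact Hc.
    + exact (caseH Sch alpha b c d L A HaA HaR HbN Hc Hd HL HA eq_refl eq_refl Ea eq_refl).
Qed.
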